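(* For all types $A,B$, if $A\equiv B$ then $[\![A]\!]=[\![B]\!]$.
   Context: Terms: $t,s,u ::= x \mid \lambda x.t \mid ts \mid \langle t,s\rangle \mid \pi_1 t \mid \pi_2 t$ (up to $\alpha$-renaming). Top-level rules: $(\lambda x.t)s \mapsto t\{x:=s\}$; $\pi_i\langle t_1,t_2\rangle \mapsto t_i$ ($i=1,2$); $\langle t,s\rangle u \mapsto \langle tu, su\rangle$; $\pi_i(\lambda x.t)\mapsto \lambda x.\pi_i t$ ($i=1,2$); $\to_{\mathsf{dist}}$ is the closure of these rules under all term constructors. $\mathrm{SN}$ is the set of strongly normalizing terms for $\to_{\mathsf{dist}}$. Types: $A ::= \tau \mid A\Rightarrow A \mid A\wedge A$ with $\tau$ a single atomic type. The relation $\equiv$ on types is the smallest equivalence relation containing $A\Rightarrow (B\wedge C)\equiv (A\Rightarrow B)\wedge(A\Rightarrow C)$ for all $A,B,C$ and closed under congruence for $\Rightarrow$ and $\wedge$ in both arguments. Interpretation: $[\![\tau]\!]=\mathrm{SN}$; $[\![A\Rightarrow B]\!]=\{t\mid \forall s\in[\![A]\!],\ ts\in[\![B]\!]\}$; $[\![A\wedge B]\!]=\{t\mid \pi_1t\in[\![A]\!]\text{ and }\pi_2 t\in[\![B]\!]\}$. *)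

(* Defs.v *)
(* Terms use de Bruijn indices (terms up to alpha-renaming). *)
From Stdlib Require Import Arith Lia.

Inductive term : Type :=
| Var : nat -> term
| Lam : term -> term
| App : term -> term -> term
| Pair : term -> term -> term
| Proj1 : term -> term
| Proj2 : term -> term.

Fixpoint lift (k : nat) (t : term) : term :=
  match t with
  | Var n => if Nat.ltb n k then Var n else Var (S n)
  | Lam t => Lam (lift (S k) t)
  | App t s => App (lift k t) (lift k s)
  | Pair t s => Pair (lift k t) (lift k s)
  | Proj1 t => Proj1 (lift k t)
  | Proj2 t => Proj2 (lift k t)
  end.

(* subst k s t : replace index k in t by s, decrementing indices > k
   (capture-avoiding substitution t{x:=s} for the bound variable x = index k) *)
Fixpoint subst (k : nat) (s : term) (t : term) : term :=
  match t with
  | Var n =>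
      match Nat.compare n k with
      | Lt => Var n
      | Eq => s
      | Gt => Var (pred n)
      end
  | Lam t => Lam (subst (S k) (lift 0 s) t)
  | App t1 t2 => App (subst k s t1) (subst k s t2)
  | Pair t1 t2 => Pair (subst k s t1) (subst k s t2)
  | Proj1 t => Proj1 (subst k s t)
  | Proj2 t => Proj2 (subst k s t)
  end.

Inductive step : term -> term -> Prop :=
| st_beta : forall t s, step (App (Lam t) s) (subst 0 s t)
| st_proj1 : forall t1 t2, step (Proj1 (Pair t1 t2)) t1
| st_proj2 : forall t1 t2, step (Proj2 (Pair t1 t2)) t2
| st_pairapp : forall t s u, step (App (Pair t s) u) (Pair (App t u) (App s u))
| st_proj1lam : forall t, step (Proj1 (Lam t)) (Lam (Proj1 t))
| st_proj2lam : forall t, step (Proj2 (Lam t)) (Lam (Proj2 t))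
| st_lam : forall t t', step t t' -> step (Lam t) (Lam t')
| st_appl : forall t t' s, step t t' -> step (App t s) (App t' s)
| st_appr : forall t s s', step s s' -> step (App t s) (App t s')
| st_pairl : forall t t' s, step t t' -> step (Pair t s) (Pair t' s)
| st_pairr : forall t s s', step s s' -> step (Pair t s) (Pair t s')
| st_proj1c : forall t t', step t t' -> step (Proj1 t) (Proj1 t')
| st_proj2c : forall t t', step t t' -> step (Proj2 t) (Proj2 t').

Definition SN (t : term) : Prop := Acc (fun u v => step v u) t.

Inductive ty : Type :=
| Atom : ty
| Arr : ty -> ty -> ty
| And : ty -> ty -> ty.

Inductive ty_equiv : ty -> ty -> Prop :=
| eq_dist : forall A B C, ty_equiv (Arr A (And B C)) (And (Arr A B) (Arr A C))
| eq_refl : forall A, ty_equiv A A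
| eq_sym : forall A B, ty_equiv A B -> ty_equiv B A
| eq_trans : forall A B C, ty_equiv A B -> ty_equiv B C -> ty_equiv A C
| eq_arr : forall A A' B B', ty_equiv A A' -> ty_equiv B B' ->
    ty_equiv (Arr A B) (Arr A' B')
| eq_and : forall A A' B B', ty_equiv A A' -> ty_equiv B B' ->
    ty_equiv (And A B) (And A' B').

Fixpoint interp (A : ty) : term -> Prop :=
  match A with
  | Atom => SN
  | Arr A B => fun t => forall s, interp A s -> interp B (App t s)
  | And A B => fun t => interp A (Proj1 t) /\ interp B (Proj2 t)
  end.

(* Main.v *)
Require Import Defs.
From Stdlib Require Import Arith Lia List.
Import ListNotations.

Ltac dbvar :=
  repeat (cbn [lift subst]; match goal with
  | |- context [Nat.ltb ?a ?b] => destruct (Nat.ltb_spec a b)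
  | |- context [Nat.compare ?a ?b] => destruct (Nat.compare_spec a b)
  end); cbn [lift subst]; try subst; try lia; try reflexivity; try (f_equal; lia).

Lemma lift_lift : forall t i k, i <= k -> lift (S k) (lift i t) = lift i (lift k t).
Proof. induction t; intros i k Hik; simpl;
  [dbvar | f_equal; apply IHt; lia | f_equal; auto ..].
Qed.

Lemma lift_subst_ge : forall t n k s, n <= k ->
  lift k (subst n s t) = subst n (lift k s) (lift (S k) t).
Proof. induction t; intros m k s Hk; simpl.
  - dbvar.
  - f_equal. rewrite IHt by lia. f_equal. apply lift_lift; lia.
  - f_equal; auto.
  - f_equal; auto.
  - f_equal; auto.
  - f_equal; auto.
Qed.

Lemma lift_subst_le : forall t n k s, k <= n ->
  lift k (subst n s t) = subst (S n) (lift k s) (lift k t).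
Proof. induction t; intros m k s Hk; simpl.
  - dbvar.
  - f_equal. rewrite IHt by lia. f_equal. first [apply lift_lift; lia | symmetry; apply lift_lift; lia].
  - f_equal; auto.
  - f_equal; auto.
  - f_equal; auto.
  - f_equal; auto.
Qed.

Lemma subst_lift : forall t k s, subst k s (lift k t) = t.
Proof. induction t; intros k s; simpl; try (f_equal; auto; fail).
  - dbvar.
Qed.

Lemma subst_subst : forall t n k u s, n <= k ->
  subst k u (subst n s t) = subst n (subst k u s) (subst (S k) (lift n u) t).
Proof. induction t; intros m k u s Hk; simpl.
  - repeat (simpl; match goal with
    | |- context [Nat.compare ?a ?b] => destruct (Nat.compare_spec a b)
    end); cbn [lift subst]; try subst; try lia; try reflexivity; try (f_equal; lia).
    all: try (rewrite subst_lift; reflexivity).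
  - f_equal. rewrite IHt by lia. f_equal.
    + rewrite lift_subst_le by lia. reflexivity.
    + f_equal. apply lift_lift; lia.
  - f_equal; auto.
  - f_equal; auto.
  - f_equal; auto.
  - f_equal; auto.
Qed.

Lemma step_lift : forall t t', step t t' -> forall k, step (lift k t) (lift k t').
Proof. induction 1; intros k; simpl; try (constructor; auto; fail).
  rewrite lift_subst_ge by lia. constructor.
Qed.

Lemma step_subst : forall t t', step t t' -> forall k u, step (subst k u t) (subst k u t').
Proof. induction 1; intros k0 w; simpl; try (constructor; auto; fail).
  rewrite (subst_subst t 0 k0) by lia. constructor.
Qed.

Inductive star : term -> term -> Prop :=
| star_refl : forall t, star t t
| star_step : forall t u v, step t u -> star u v -> star t v.

Lemma star_trans : forall a b c, star a b -> star b c -> star a c.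
Proof. induction 1; intros; auto. econstructor; eauto. Qed.

Lemma star_cong : forall (f : term -> term), (forall a b, step a b -> step (f a) (f b)) ->
  forall a b, star a b -> star (f a) (f b).
Proof. induction 2. constructor. econstructor; eauto. Qed.

Lemma star_subst_arg : forall t k s s', step s s' -> star (subst k s t) (subst k s' t).
Proof. induction t; intros k s s' Hs; simpl.
  - destruct (Nat.compare n k). econstructor; eauto; constructor. constructor. constructor.
  - apply (star_cong Lam). intros; constructor; auto. apply IHt. apply step_lift; auto.
  - eapply star_trans. apply (star_cong (fun x => App x (subst k s t2))).
    intros; constructor; auto. apply IHt1; eauto.
    apply (star_cong (fun x => App _ x)). intros; constructor; auto. apply IHt2; auto.
  - eapply star_trans. apply (star_cong (fun x => Pair x (subst k s t2))).
    intros; constructor; auto. apply IHt1; eauto.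
    apply (star_cong (fun x => Pair _ x)). intros; constructor; auto. apply IHt2; auto.
  - apply (star_cong Proj1). intros; constructor; auto. auto.
  - apply (star_cong Proj2). intros; constructor; auto. auto.
Qed.

Lemma SN_step : forall t t', SN t -> step t t' -> SN t'.
Proof. intros t t' [H] Hs. apply H; auto. Qed.

Lemma SN_star : forall t t', star t t' -> SN t -> SN t'.
Proof. induction 1; intros; auto. apply IHstar. eapply SN_step; eauto. Qed.

Lemma SN_inj : forall (f : term -> term), (forall a b, step a b -> step (f a) (f b)) ->
  forall u, SN (f u) -> SN u.
Proof. intros f Hf u H. remember (f u) as M. revert u HeqM.
  induction H as [M _ IH]; intros u ->. constructor. intros y Hy.
  eapply IH. apply Hf; eauto. reflexivity. Qed.

Inductive frame := FApp (a : term) | FP1 | FP2.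
Definition fr f h := match f with FApp a => App h a | FP1 => Proj1 h | FP2 => Proj2 h end.
Fixpoint plug (E : list frame) h := match E with nil => h | f :: E => plug E (fr f h) end.

Inductive stepE : list frame -> list frame -> Prop :=
| se_here : forall a a' E, step a a' -> stepE (FApp a :: E) (FApp a' :: E)
| se_there : forall f E E', stepE E E' -> stepE (f :: E) (f :: E').

Lemma plug_step : forall E u u', step u u' -> step (plug E u) (plug E u').
Proof. induction E; intros; simpl; auto. apply IHE. destruct a; simpl; constructor; auto. Qed.

Lemma plug_stepE : forall E E' u, stepE E E' -> step (plug E u) (plug E' u).
Proof. intros E E' u H; revert u; induction H; intros u; simpl.
  apply plug_step. constructor; auto. auto. Qed.

Lemma SN_plug : forall E u, SN (plug E u) -> SN u.
Proof. induction E; simpl; intros; auto. apply IHE in H. destruct a; simpl in H.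
  - eapply (SN_inj (fun x => App x a)); eauto. intros; constructor; auto.
  - eapply (SN_inj Proj1); eauto. intros; constructor; auto.
  - eapply (SN_inj Proj2); eauto. intros; constructor; auto.
Qed.

Lemma SN_app_r : forall u a, SN (App u a) -> SN a.
Proof. intros. eapply (SN_inj (App u)); eauto. intros; constructor; auto. Qed.

Definition notLP h := match h with Lam _ | Pair _ _ => False | _ => True end.

Lemma plug_inv : forall E H N, notLP H -> step (plug E H) N ->
  (exists E', stepE E E' /\ N = plug E' H) \/ (exists H', step H H' /\ N = plug E H').
Proof. induction E; simpl; intros H N HH Hs.
  - right; eauto.
  - destruct (IHE (fr a H) N ltac:(destruct a; exact I) Hs) as [[E' [HE ->]] | [H' [HH' ->]]].
    + left. exists (a :: E'). split. constructor; auto. reflexivity.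
    + destruct a; simpl in HH'; inversion HH'; subst; simpl in HH; try contradiction.
      * right. exists t'. split; auto.
      * left. exists (FApp s' :: E). split. constructor; auto. reflexivity.
      * right. exists t'. split; auto.
      * right. exists t'. split; auto.
Qed.

Lemma HP1 : forall y, SN y -> forall E x, SN (plug E x) -> SN (plug E (Proj1 (Pair x y))).
Proof. intros y Hy. induction Hy as [y _ IHy]. intros E x Hx.
  remember (plug E x) as M. revert E x HeqM. induction Hx as [M HM IHM]. intros E x ->.
  constructor. intros N Hs. apply plug_inv in Hs; [|exact I].
  destruct Hs as [[E' [HE ->]] | [H' [HH' ->]]].
  - eapply IHM; eauto. apply plug_stepE; auto.
  - inversion HH'; subst.
    + constructor; auto.
    + inversion H0; subst.
      * eapply IHM; eauto. apply plug_step; auto.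
      * apply IHy; auto. constructor; auto.
Qed.

Lemma HP2 : forall x, SN x -> forall E y, SN (plug E y) -> SN (plug E (Proj2 (Pair x y))).
Proof. intros x Hx. induction Hx as [x _ IHx]. intros E y Hy.
  remember (plug E y) as M. revert E y HeqM. induction Hy as [M HM IHM]. intros E y ->.
  constructor. intros N Hs. apply plug_inv in Hs; [|exact I].
  destruct Hs as [[E' [HE ->]] | [H' [HH' ->]]].
  - eapply IHM; eauto. apply plug_stepE; auto.
  - inversion HH'; subst.
    + constructor; auto.
    + inversion H0; subst.
      * apply IHx; auto. constructor; auto.
      * eapply IHM; eauto. apply plug_step; auto.
Qed.

Lemma HBeta : forall s, SN s -> forall E u, SN (plug E (subst 0 s u)) -> SN (plug E (App (Lam u) s)).
Proof. intros s Hs. induction Hs as [s _ IHs]. intros E u Hu.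
  remember (plug E (subst 0 s u)) as M. revert E u HeqM.
  induction Hu as [M HM IHM]. intros E u ->.
  constructor. intros N Hst. apply plug_inv in Hst; [|exact I].
  destruct Hst as [[E' [HE ->]] | [H' [HH' ->]]].
  - eapply IHM; eauto. apply plug_stepE; auto.
  - inversion HH'; subst.
    + constructor; auto.
    + inversion H2; subst. eapply IHM; eauto. apply plug_step. apply step_subst; auto.
    + apply IHs; auto. eapply SN_star; [|constructor; exact HM].
      apply star_cong. apply plug_step. apply star_subst_arg; auto.
Qed.

Lemma K1 : forall E t s, SN (plug E (App (Proj1 t) s)) -> SN (App (Proj2 t) s) ->
  SN (plug E (Proj1 (App t s))).
Proof. intros E t s HQ. remember (plug E (App (Proj1 t) s)) as M. revert E t s HeqM.
  induction HQ as [M HM IHM]. intros E t s -> H2.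
  constructor. intros N Hst. apply plug_inv in Hst; [|exact I].
  destruct Hst as [[E' [HE ->]] | [H' [HH' ->]]].
  - eapply IHM; eauto. apply plug_stepE; auto.
  - inversion HH'; subst. inversion H0; subst.
    +
      eapply SN_step. eapply SN_step. constructor; exact HM.
      apply plug_step. constructor. constructor. simpl. apply plug_step. constructor.
    + apply HP1.
        eapply SN_step; [exact H2|]. constructor. constructor.
      * eapply SN_step. constructor; exact HM. apply plug_step. constructor. constructor.
    + eapply IHM; eauto. apply plug_step. constructor. constructor. auto.
      eapply SN_step; eauto. constructor. constructor. auto.
    + eapply IHM; eauto. apply plug_step. constructor. auto.
      eapply SN_step; eauto. constructor. auto.
Qed.

Lemma K2 : forall E t s, SN (plug E (App (Proj2 t) s)) -> SN (App (Proj1 t) s) ->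
  SN (plug E (Proj2 (App t s))).
Proof. intros E t s HQ. remember (plug E (App (Proj2 t) s)) as M. revert E t s HeqM.
  induction HQ as [M HM IHM]. intros E t s -> H2.
  constructor. intros N Hst. apply plug_inv in Hst; [|exact I].
  destruct Hst as [[E' [HE ->]] | [H' [HH' ->]]].
  - eapply IHM; eauto. apply plug_stepE; auto.
  - inversion HH'; subst. inversion H0; subst.
    + eapply SN_step. eapply SN_step. constructor; exact HM.
      apply plug_step. constructor. constructor. simpl. apply plug_step. constructor.
    + apply HP2.
      * eapply SN_step; [exact H2|]. constructor. constructor.
      * eapply SN_step. constructor; exact HM. apply plug_step. constructor. constructor.
    + eapply IHM; eauto. apply plug_step. constructor. constructor. auto.
      eapply SN_step; eauto. constructor. constructor. auto.
    + eapply IHM; eauto. apply plug_step. constructor. auto.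
      eapply SN_step; eauto. constructor. auto.
Qed.

Lemma K3 : forall E t s, SN s -> SN (plug E (Proj1 (App t s))) ->
  SN (plug E (App (Proj1 t) s)).
Proof. intros E t s Hs HP. remember (plug E (Proj1 (App t s))) as M. revert E t s Hs HeqM.
  induction HP as [M HM IHM]. intros E t s Hs ->.
  constructor. intros N Hst. apply plug_inv in Hst; [|exact I].
  destruct Hst as [[E' [HE ->]] | [H' [HH' ->]]].
  - eapply IHM; eauto. apply plug_stepE; auto.
  - inversion HH'; subst.
    + inversion H2; subst.
      * eapply SN_step. eapply SN_step. constructor; exact HM.
        apply plug_step. constructor. constructor. apply plug_step. constructor.
      * apply HBeta; auto. simpl. eapply SN_step. constructor; exact HM.
        apply plug_step. constructor. constructor.
      * eapply IHM; eauto. apply plug_step. constructor. constructor. auto.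
    + eapply IHM. apply plug_step. constructor. apply st_appr. eauto.
      eapply SN_step; eauto. reflexivity.
Qed.

Lemma K4 : forall E t s, SN s -> SN (plug E (Proj2 (App t s))) ->
  SN (plug E (App (Proj2 t) s)).
Proof. intros E t s Hs HP. remember (plug E (Proj2 (App t s))) as M. revert E t s Hs HeqM.
  induction HP as [M HM IHM]. intros E t s Hs ->.
  constructor. intros N Hst. apply plug_inv in Hst; [|exact I].
  destruct Hst as [[E' [HE ->]] | [H' [HH' ->]]].
  - eapply IHM; eauto. apply plug_stepE; auto.
  - inversion HH'; subst.
    + inversion H2; subst.
      * eapply SN_step. eapply SN_step. constructor; exact HM.
        apply plug_step. constructor. constructor. apply plug_step. constructor.
      * apply HBeta; auto. simpl. eapply SN_step. constructor; exact HM.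
        apply plug_step. constructor. constructor.
      * eapply IHM; eauto. apply plug_step. constructor. constructor. auto.
    + eapply IHM. apply plug_step. constructor. apply st_appr. eauto.
      eapply SN_step; eauto. reflexivity.
Qed.

Inductive neutral : term -> Prop :=
| nvar : forall n, neutral (Var n)
| napp : forall h a, neutral h -> neutral (App h a)
| np1 : forall h, neutral h -> neutral (Proj1 h)
| np2 : forall h, neutral h -> neutral (Proj2 h).

Lemma neutral_step : forall h, neutral h -> forall h', step h h' -> neutral h'.
Proof. induction 1; intros h' Hs; inversion Hs; subst;
  try (match goal with H : neutral _ |- _ => inversion H end; fail);
  constructor; auto. Qed.

Lemma SN_app_neutral : forall h, SN h -> neutral h -> forall a, SN a -> SN (App h a).
Proof. intros h Hh. induction Hh as [h _ IHh]. intros Hn a Ha.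
  induction Ha as [a HA IHa]. constructor. intros N Hs. inversion Hs; subst.
  - inversion Hn.
  - inversion Hn.
  - apply IHh; auto. eapply neutral_step; eauto. constructor; auto.
  - apply IHa; auto.
Qed.

Lemma SN_p1_neutral : forall h, SN h -> neutral h -> SN (Proj1 h).
Proof. intros h Hh. induction Hh as [h _ IHh]. intros Hn.
  constructor. intros N Hs. inversion Hs; subst; try (inversion Hn; fail).
  apply IHh; auto. eapply neutral_step; eauto. Qed.

Lemma SN_p2_neutral : forall h, SN h -> neutral h -> SN (Proj2 h).
Proof. intros h Hh. induction Hh as [h _ IHh]. intros Hn.
  constructor. intros N Hs. inversion Hs; subst; try (inversion Hn; fail).
  apply IHh; auto. eapply neutral_step; eauto. Qed.

Lemma CR : forall A, (forall u, interp A u -> SN u) /\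
  (forall h, neutral h -> SN h -> interp A h).
Proof. induction A; simpl.
  - split; auto.
  - destruct IHA1 as [C1 C3], IHA2 as [D1 D3]. split.
    + intros u H. assert (Hv : interp A1 (Var 0)) by (apply C3; [constructor | constructor; intros y Hy; inversion Hy]).
      specialize (D1 _ (H _ Hv)). eapply (SN_inj (fun x => App x (Var 0))); eauto.
      intros; constructor; auto.
    + intros h Hn Hh s Hs. apply D3. constructor; auto. apply SN_app_neutral; auto.
  - destruct IHA1 as [C1 C3], IHA2 as [D1 D3]. split.
    + intros u [H1 H2]. eapply (SN_inj Proj1); eauto. intros; constructor; auto.
    + intros h Hn Hh. split.
      * apply C3. constructor; auto. apply SN_p1_neutral; auto.
      * apply D3. constructor; auto. apply SN_p2_neutral; auto.
Qed.

Fixpoint Paths (B : ty) (E : list frame) : Prop :=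
  match B, E with
  | Atom, nil => True
  | Arr A B, FApp a :: E => interp A a /\ Paths B E
  | And A B, FP1 :: E => Paths A E
  | And A B, FP2 :: E => Paths B E
  | _, _ => False
  end.

Lemma char : forall B u, interp B u <-> (forall E, Paths B E -> SN (plug E u)).
Proof. induction B; intros u; simpl.
  - split. intros H [|f E] HE; simpl in *; [auto | destruct f; contradiction].
    intros H. apply (H nil I).
  - split.
    + intros H [|[a| |] E] HE; simpl in *; try contradiction.
      destruct HE as [Ha HE]. apply (proj1 (IHB2 _) (H a Ha)); auto.
    + intros H s Hs. apply IHB2. intros E HE. apply (H (FApp s :: E)). simpl; auto.
  - split.
    + intros [H1 H2] [|[a| |] E] HE; simpl in *; try contradiction.
      apply (proj1 (IHB1 _) H1); auto. apply (proj1 (IHB2 _) H2); auto.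
    + intros H. split.
      * apply IHB1. intros E HE. apply (H (FP1 :: E)). auto.
      * apply IHB2. intros E HE. apply (H (FP2 :: E)). auto.
Qed.

Theorem lemma7 : forall A B : ty, ty_equiv A B -> forall t : term, interp A t <-> interp B t.
Proof.
  induction 1; intros t.
  - simpl. split.
    + intros H. split; intros s Hs; destruct (H s Hs) as [H1 H2].
      * apply char. intros E HE. apply K3. apply (proj1 (CR A) _ Hs).
        apply (proj1 (char _ _) H1); auto.
      * apply char. intros E HE. apply K4. apply (proj1 (CR A) _ Hs).
        apply (proj1 (char _ _) H2); auto.
    + intros [H1 H2] s Hs. split.
      * apply char. intros E HE. apply K1. apply (proj1 (char _ _) (H1 s Hs)); auto.
        apply (proj1 (CR C)). apply H2; auto.
      * apply char. intros E HE. apply K2. apply (proj1 (char _ _) (H2 s Hs)); auto.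
        apply (proj1 (CR B)). apply H1; auto.
  - tauto.
  - rewrite IHty_equiv; tauto.
  - rewrite IHty_equiv1; auto.
  - simpl. split; intros Hf s Hs.
    + apply IHty_equiv2. apply Hf. apply IHty_equiv1. auto.
    + apply IHty_equiv2. apply Hf. apply IHty_equiv1. auto.
  - simpl. rewrite IHty_equiv1, IHty_equiv2. tauto.
Qed.
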